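(* Let $E$ be a pseudo effect algebra satisfying $\sigma$-(RDP). If $m$ is a $\sigma$-additive Jordan signed measure on $E$, then $m^+$, $m^-$ and $|m|$ are $\sigma$-additive.
   Context: Pseudo effect algebra: partial algebra $(E;+,0,1)$ such that for all $a,b,c$: (i) $a+b$ and $(a+b)+c$ exist iff $b+c$ and $a+(b+c)$ exist, and then they are equal; (ii) there is exactly one $d$ and one $e$ with $a+d=e+a=1$; (iii) if $a+b$ exists there are $d,e$ with $a+b=d+a=b+e$; (iv) if $1+a$ or $a+1$ exists then $a=0$. Order: $a\le b$ iff $a+c=b$ for some $c$. For a sequence $\{a_n\}$ such that $b_n=a_1+\cdots+a_n$ exists for all $n$, if $a=\bigvee_n b_n$ exists in $E$ we write $a=\sum_n a_n$. $E$ satisfies $\sigma$-(RDP) if whenever $a_1+a_2=\sum_n b_n$, there are sequences $\{c_{1n}\}_n,\{c_{2n}\}_n$ in $E$ with $a_i=\sum_n c_{in}$ ($i=1,2$) and $b_n=c_{1n}+c_{2n}$ for all $n$ (this implies (RDP)). Signed measure: $m:E\to\mathbb R$ additive on defined sums; measure: nonnegative one; $m$ is $\sigma$-additive if $a_1\le a_2\le\cdots$ with $a=\bigvee_na_n$ in $E$ implies $m(a)=\lim_n m(a_n)$. Jordan signed measure: difference of two measures; $\mathcal J(E)$ is their set ordered by $m_1\le^+m_2$ iff $m_2-m_1$ is a measure, a lattice-ordered group; $m^+:=m\vee0$, $m^-:=-(m\wedge0)$, $|m|:=m^++m^-$. *)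

(* Defs.v *)
From Stdlib Require Import Reals.
Open Scope R_scope.
Set Implicit Arguments.

Definition obind {A B : Type} (f : A -> option B) (o : option A) : option B :=
  match o with Some a => f a | None => None end.

Record PEA := {
  carrier :> Type;
  pplus : carrier -> carrier -> option carrier;
  pzero : carrier;
  pone : carrier;
  (* (i): (a+b)+c defined iff a+(b+c) defined, and then equal *)
  pea_assoc : forall a b c,
      obind (fun ab => pplus ab c) (pplus a b) = obind (fun bc => pplus a bc) (pplus b c);
  pea_compl_r : forall a, exists! d, pplus a d = Some pone;
  pea_compl_l : forall a, exists! e, pplus e a = Some pone;
  pea_conj : forall a b s, pplus a b = Some s ->
      exists d e, pplus d a = Some s /\ pplus b e = Some s;
  pea_one : forall a, ((exists x, pplus pone a = Some x) \/ (exists x, pplus a pone = Some x)) ->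
      a = pzero
}.

Section PEAdefs.
Variable E : PEA.

Definition ple (a b : E) : Prop := exists c, pplus E a c = Some b.

Definition is_sup (f : nat -> E) (x : E) : Prop :=
  (forall n, ple (f n) x) /\ (forall y, (forall n, ple (f n) y) -> ple x y).

Fixpoint psum (a : nat -> E) (n : nat) : option E :=
  match n with
  | O => Some (a O)
  | S k => obind (fun s => pplus E s (a (S k))) (psum a k)
  end.

Definition is_sum (a : nat -> E) (x : E) : Prop :=
  exists b : nat -> E, (forall n, psum a n = Some (b n)) /\ is_sup b x.

Definition sigma_RDP : Prop :=
  forall (a1 a2 s : E) (b : nat -> E),
    pplus E a1 a2 = Some s -> is_sum b s ->
    exists c1 c2 : nat -> E,
      is_sum c1 a1 /\ is_sum c2 a2 /\ (forall n, pplus E (c1 n) (c2 n) = Some (b n)).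

Definition signed_measure (m : E -> R) : Prop :=
  forall a b c, pplus E a b = Some c -> m c = m a + m b.

Definition measure (m : E -> R) : Prop :=
  signed_measure m /\ forall a, 0 <= m a.

Definition sigma_additive (m : E -> R) : Prop :=
  forall (a : nat -> E) (x : E),
    (forall n, ple (a n) (a (S n))) -> is_sup a x -> Un_cv (fun n => m (a n)) (m x).

Definition jordan (m : E -> R) : Prop :=
  exists m1 m2, measure m1 /\ measure m2 /\ forall a, m a = m1 a - m2 a.

Definition jle (m1 m2 : E -> R) : Prop := measure (fun a => m2 a - m1 a).

Definition jzero : E -> R := fun _ => 0.

Definition is_join_J (m1 m2 j : E -> R) : Prop :=
  jordan j /\ jle m1 j /\ jle m2 j /\
  forall k, jordan k -> jle m1 k -> jle m2 k -> jle j k.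

Definition is_meet_J (m1 m2 j : E -> R) : Prop :=
  jordan j /\ jle j m1 /\ jle j m2 /\
  forall k, jordan k -> jle k m1 -> jle k m2 -> jle k j.

End PEAdefs.

(* Main.v *)
Require Import Defs.
From Stdlib Require Import Reals.
From Stdlib Require Import Lra Lia Classical ClassicalEpsilon.
Open Scope R_scope.

Lemma assoc_lr (E : PEA) (a b c ab s : E) :
  pplus E a b = Some ab -> pplus E ab c = Some s ->
  exists bc, pplus E b c = Some bc /\ pplus E a bc = Some s.
Proof.
  intros H1 H2. pose proof (pea_assoc E a b c) as H.
  rewrite H1 in H; simpl in H. rewrite H2 in H.
  destruct (pplus E b c) as [bc|] eqn:Hbc; simpl in H; [|discriminate].
  exists bc; split; [reflexivity | symmetry; exact H].
Qed.

Lemma assoc_rl (E : PEA) (a b c bc s : E) :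
  pplus E b c = Some bc -> pplus E a bc = Some s ->
  exists ab, pplus E a b = Some ab /\ pplus E ab c = Some s.
Proof.
  intros H1 H2. pose proof (pea_assoc E a b c) as H.
  rewrite H1 in H; simpl in H. rewrite H2 in H.
  destruct (pplus E a b) as [ab|] eqn:Hab; simpl in H; [|discriminate].
  exists ab; split; [reflexivity | exact H].
Qed.

Lemma one_zero (E : PEA) : pplus E (pone E) (pzero E) = Some (pone E).
Proof.
  destruct (pea_compl_r E (pone E)) as [d [Hd _]].
  assert (d = pzero E) by (apply pea_one; left; eauto).
  subst; exact Hd.
Qed.

Lemma zero_one (E : PEA) : pplus E (pzero E) (pone E) = Some (pone E).
Proof.
  destruct (pea_compl_l E (pone E)) as [e [He _]].
  assert (e = pzero E) by (apply pea_one; right; eauto).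
  subst; exact He.
Qed.

Lemma plus_zero (E : PEA) (a : E) : pplus E a (pzero E) = Some a.
Proof.
  destruct (pea_compl_l E a) as [e [He _]].
  destruct (assoc_lr _ _ _ _ _ _ He (one_zero E)) as [t [Ht1 Ht2]].
  destruct (pea_compl_r E e) as [d [_ Hu]].
  assert (d = a) by (apply Hu; exact He).
  assert (d = t) by (apply Hu; exact Ht2).
  congruence.
Qed.

Lemma zero_plus (E : PEA) (a : E) : pplus E (pzero E) a = Some a.
Proof.
  destruct (pea_compl_r E a) as [f [Hf _]].
  destruct (assoc_rl _ _ _ _ _ _ Hf (zero_one E)) as [t [Ht1 Ht2]].
  destruct (pea_compl_l E f) as [d [_ Hu]].
  assert (d = a) by (apply Hu; exact Hf).
  assert (d = t) by (apply Hu; exact Ht2).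
  congruence.
Qed.

Lemma sum_zero (E : PEA) (u v : E) : pplus E u v = Some (pzero E) -> u = pzero E.
Proof.
  intros H.
  destruct (assoc_lr _ _ _ _ _ _ H (zero_one E)) as [w [Hw1 Hw2]].
  assert (v = pzero E) by (apply pea_one; right; eauto).
  subst v. pose proof (plus_zero E u). congruence.
Qed.

Lemma psum_step (E : PEA) (c : nat -> E) (bb : nat -> E) :
  (forall n, psum E c n = Some (bb n)) ->
  forall n, pplus E (bb n) (c (S n)) = Some (bb (S n)).
Proof.
  intros H n. pose proof (H (S n)) as H1. simpl in H1. rewrite (H n) in H1.
  simpl in H1. exact H1.
Qed.

Definition seq2 (E : PEA) (a b : E) : nat -> E :=
  fun n => match n with 0%nat => a | 1%nat => b | _ => pzero E end.

Lemma seq2_sum (E : PEA) (a b c : E) : pplus E a b = Some c -> is_sum E (seq2 E a b) c.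
Proof.
  intros Hc. exists (fun n => match n with 0%nat => a | _ => c end). split.
  - induction n. reflexivity. simpl. rewrite IHn. destruct n; simpl.
    exact Hc. apply plus_zero.
  - split.
    + intros n; destruct n. exists b; exact Hc. exists (pzero E); apply plus_zero.
    + intros z Hz. exact (Hz 1%nat).
Qed.

Lemma cv_eventually_const (u : nat -> R) (l V : R) :
  Un_cv u l -> (forall n, u (S n) = V) -> l = V.
Proof.
  intros Hu Hc. destruct (Req_dec l V) as [|Hne]; auto. exfalso.
  assert (Hp: 0 < Rabs (l - V)) by (apply Rabs_pos_lt; lra).
  destruct (Hu _ Hp) as [N HN].
  specialize (HN (S N) ltac:(lia)). unfold R_dist in HN. rewrite Hc in HN.
  rewrite (Rabs_minus_sym V l) in HN. lra.
Qed.

Lemma chain_decomp (E : PEA) (a : nat -> E) :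
  (forall n, ple E (a n) (a (S n))) ->
  exists d : nat -> E, forall n, psum E d n = Some (a n).
Proof.
  intros Hinc.
  assert (Hg: forall n, {c | pplus E (a n) c = Some (a (S n))}).
  { intros n; apply constructive_indefinite_description; exact (Hinc n). }
  exists (fun n => match n with 0%nat => a 0%nat | S j => proj1_sig (Hg j) end).
  induction n. reflexivity. simpl. rewrite IHn. simpl. exact (proj2_sig (Hg n)).
Qed.

Lemma join_sigma (E : PEA) (m p : E -> R) :
  sigma_RDP E -> jordan E m -> sigma_additive E m ->
  is_join_J E m (jzero E) p -> sigma_additive E p.
Proof.
  intros HR Hj Hmsig [Hpj [Hmp [H0p Hmin]]].
  assert (Hms: forall a b c, pplus E a b = Some c -> m c = m a + m b).
  { destruct Hj as [m1 [m2 [[Hm1s _] [[Hm2s _] Heq]]]].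
    intros a b c H. rewrite !Heq, (Hm1s _ _ _ H), (Hm2s _ _ _ H). ring. }
  assert (Hps: forall a b c, pplus E a b = Some c -> p c = p a + p b).
  { intros a b c H. destruct H0p as [Hs _]. pose proof (Hs _ _ _ H) as H1.
    unfold jzero in H1. lra. }
  assert (Hpn: forall a, 0 <= p a).
  { intros a. destruct H0p as [_ Hn]. pose proof (Hn a) as H1. unfold jzero in H1. lra. }
  assert (Hpm: forall a, m a <= p a).
  { intros a. destruct Hmp as [_ Hn]. pose proof (Hn a) as H1. simpl in H1. lra. }
  assert (Hpmono: forall a b, ple E a b -> p a <= p b).
  { intros a b [c Hc]. rewrite (Hps _ _ _ Hc). pose proof (Hpn c). lra. }
  set (Sx := fun x r => exists b, ple E b x /\ r = m b).
  assert (Hk: forall x, {s | is_lub (Sx x) s}).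
  { intros x. apply completeness.
    - destruct Hj as [m1 [m2 [[Hm1s Hm1n] [[Hm2s Hm2n] Heq]]]].
      exists (m1 x). intros r [b [[c Hc] ->]]. rewrite Heq.
      pose proof (Hm1s _ _ _ Hc). pose proof (Hm1n c). pose proof (Hm2n b). lra.
    - exists (m (pzero E)). exists (pzero E). split; [exists x; apply zero_plus | reflexivity]. }
  set (k := fun x => proj1_sig (Hk x)).
  assert (Hklub: forall x, is_lub (Sx x) (k x)) by (intros x; exact (proj2_sig (Hk x))).
  assert (HkS: forall x b, ple E b x -> m b <= k x).
  { intros x b Hb. apply (proj1 (Hklub x)). exists b; split; auto. }
  assert (Hm0: m (pzero E) = 0).
  { pose proof (Hms _ _ _ (plus_zero E (pzero E))). lra. }
  assert (Hkn: forall a, 0 <= k a).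
  { intros a. rewrite <- Hm0. apply HkS. exists a; apply zero_plus. }
  assert (Hkm: forall a, m a <= k a).
  { intros a. apply HkS. exists (pzero E); apply plus_zero. }
  assert (Hkadd: forall a b c, pplus E a b = Some c -> k c = k a + k b).
  { intros a b c Hc. apply Rle_antisym.
    - apply (proj2 (Hklub c)). intros r [b' [[y Hy] ->]].
      destruct (HR _ _ _ _ Hy (seq2_sum E a b c Hc)) as [c1 [c2 [[bb [Hbb Hsupb]] [_ Hcc]]]].
      assert (Hz: forall n, c1 (S (S n)) = pzero E).
      { intros n. apply (sum_zero E _ (c2 (S (S n)))). exact (Hcc (S (S n))). }
      assert (Hval: forall n, m (bb (S n)) = m (c1 0%nat) + m (c1 1%nat)).
      { induction n.
        - pose proof (psum_step E c1 bb Hbb 0) as H1.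
          pose proof (Hbb 0%nat) as H0. simpl in H0. injection H0 as H0.
          rewrite (Hms _ _ _ H1), <- H0. reflexivity.
        - pose proof (psum_step E c1 bb Hbb (S n)) as H1.
          rewrite (Hms _ _ _ H1), IHn, Hz, Hm0. ring. }
      assert (Hcv := Hmsig bb b' (fun n => ex_intro _ _ (psum_step E c1 bb Hbb n)) Hsupb).
      rewrite (cv_eventually_const _ _ _ Hcv Hval).
      pose proof (HkS a (c1 0%nat) (ex_intro _ _ (Hcc 0%nat))).
      pose proof (HkS b (c1 1%nat) (ex_intro _ _ (Hcc 1%nat))). lra.
    - assert (Hpair: forall r1 r2, Sx a r1 -> Sx b r2 -> r1 + r2 <= k c).
      { intros r1 r2 [b1 [[u Hu] ->]] [b2 [[v Hv] ->]].
        destruct (assoc_lr _ _ _ _ _ _ Hu Hc) as [w [Hw1 Hw2]].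
        destruct (assoc_rl _ _ _ _ _ _ Hv Hw1) as [t [Ht1 Ht2]].
        destruct (pea_conj E _ _ Ht1) as [d [e [_ He]]].
        destruct (assoc_lr _ _ _ _ _ _ He Ht2) as [z [Hz1 Hz2]].
        destruct (assoc_rl _ _ _ _ _ _ Hz2 Hw2) as [r [Hr1 Hr2]].
        rewrite <- (Hms _ _ _ Hr1). apply HkS. exists z; exact Hr2. }
      assert (H1: forall r2, Sx b r2 -> k a <= k c - r2).
      { intros r2 H2. apply (proj2 (Hklub a)). intros r1 H1.
        specialize (Hpair r1 r2 H1 H2). lra. }
      assert (H2: k b <= k c - k a).
      { apply (proj2 (Hklub b)). intros r2 H2. specialize (H1 r2 H2). lra. }
      lra. }
  assert (Hpk: forall a, p a <= k a).
  { assert (H := Hmin k).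
    assert (Hjk: jordan E k).
    { exists k, (fun _ : E => 0%R). split; [split; [exact Hkadd | exact Hkn] |].
      split; [split; [unfold signed_measure; intros; lra | intros; lra] | intros; lra]. }
    assert (Hmk: jle E m k).
    { split. intros a b c Hc. rewrite (Hkadd _ _ _ Hc), (Hms _ _ _ Hc). ring.
      intros a. pose proof (Hkm a). lra. }
    assert (H0k: jle E (jzero E) k).
    { split. intros a b c Hc. unfold jzero. rewrite (Hkadd _ _ _ Hc). ring.
      intros a. unfold jzero. pose proof (Hkn a). lra. }
    destruct (H Hjk Hmk H0k) as [_ Hn]. intros a. pose proof (Hn a) as H2.
    simpl in H2. lra. }
  intros a x Hinc Hsup eps Heps.
  destruct (classic (exists r, Sx x r /\ k x - eps/2 < r)) as [[r [[b [Hb ->]] Hr]] | Hno].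
  2:{ exfalso. assert (k x <= k x - eps/2).
      { apply (proj2 (Hklub x)). intros r Hr. apply Rnot_lt_le. intro. apply Hno; eauto. }
      lra. }
  destruct Hb as [c Hbc].
  destruct (chain_decomp E a Hinc) as [d Hd].
  assert (Hsum: is_sum E d x) by (exists a; split; assumption).
  destruct (HR _ _ _ _ Hbc Hsum) as [c1 [c2 [[bb [Hbb Hsupb]] [_ Hcc]]]].
  assert (Hcv := Hmsig bb b (fun n => ex_intro _ _ (psum_step E c1 bb Hbb n)) Hsupb).
  assert (Hpbb: forall n, p (bb n) <= p (a n)).
  { induction n.
    - pose proof (Hbb 0%nat) as H0. simpl in H0. injection H0 as H0.
      pose proof (Hd 0%nat) as H1. simpl in H1. injection H1 as H1.
      pose proof (Hcc 0%nat) as H2. rewrite H1 in H2. rewrite <- H0.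
      rewrite (Hps _ _ _ H2). pose proof (Hpn (c2 0%nat)). lra.
    - pose proof (psum_step E c1 bb Hbb n) as H1.
      pose proof (psum_step E d a Hd n) as H2.
      rewrite (Hps _ _ _ H1), (Hps _ _ _ H2), (Hps _ _ _ (Hcc (S n))).
      pose proof (Hpn (c2 (S n))). lra. }
  assert (Hmono: forall n j, p (a n) <= p (a (n + j)%nat)).
  { intros n j. induction j. rewrite Nat.add_0_r. lra.
    rewrite Nat.add_succ_r. pose proof (Hpmono _ _ (Hinc (n + j)%nat)). lra. }
  assert (Hpx: forall n, p (a n) <= p x) by (intros n; apply Hpmono; apply (proj1 Hsup)).
  destruct (Hcv (eps/2)) as [N HN]; [lra|].
  exists N. intros n Hn. unfold R_dist in *.
  specialize (HN N (le_n N)). apply Rabs_def2 in HN. destruct HN as [HN1 HN2].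
  pose proof (Hpm (bb N)). pose proof (Hpbb N). pose proof (Hpx n). pose proof (Hpk x).
  pose proof (Hmono N (n - N)%nat) as Hm'. replace (N + (n - N))%nat with n in Hm' by lia.
  apply Rabs_def1; lra.
Qed.

(* p = m^+ = m \/ 0 and q = m /\ 0 in J(E); then m^- = -q and |m| = p + m^- . *)
Theorem proposition4p6 (E : PEA) (m : E -> R) :
  sigma_RDP E -> jordan E m -> sigma_additive E m ->
  forall p q : E -> R,
    is_join_J E m (jzero E) p -> is_meet_J E m (jzero E) q ->
    sigma_additive E p /\
    sigma_additive E (fun a => - q a) /\
    sigma_additive E (fun a => p a + - q a).
Proof.
  intros HR Hj Hs p q Hp Hq.
  assert (Hpsig := join_sigma E m p HR Hj Hs Hp).
  destruct Hp as [Hpj [Hmp [H0p Hpmin]]]. destruct Hq as [Hqj [Hqm [Hq0 Hqmin]]].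
  destruct Hj as [m1 [m2 [[Hm1s Hm1n] [[Hm2s Hm2n] Heq]]]].
  assert (Hms: forall a b c, pplus E a b = Some c -> m c = m a + m b).
  { intros a b c H. rewrite !Heq, (Hm1s _ _ _ H), (Hm2s _ _ _ H). ring. }
  assert (Hps: forall a b c, pplus E a b = Some c -> p c = p a + p b).
  { intros a b c H. destruct H0p as [Hs' _]. pose proof (Hs' _ _ _ H) as H1.
    unfold jzero in H1. lra. }
  assert (Hpn: forall a, 0 <= p a).
  { intros a. destruct H0p as [_ Hn]. pose proof (Hn a) as H1. unfold jzero in H1. lra. }
  assert (Hpm: forall a, m a <= p a).
  { intros a. destruct Hmp as [_ Hn]. pose proof (Hn a) as H1. simpl in H1. lra. }
  assert (Hqs: forall a b c, pplus E a b = Some c -> q c = q a + q b).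
  { intros a b c H. destruct Hq0 as [Hs' _]. pose proof (Hs' _ _ _ H) as H1.
    unfold jzero in H1. lra. }
  assert (Hqn: forall a, q a <= 0).
  { intros a. destruct Hq0 as [_ Hn]. pose proof (Hn a) as H1. unfold jzero in H1. lra. }
  assert (Hqm': forall a, q a <= m a).
  { intros a. destruct Hqm as [_ Hn]. pose proof (Hn a) as H1. simpl in H1. lra. }
  assert (H1: forall a, m a - p a <= q a).
  { assert (H := Hqmin (fun y => m y - p y)).
    destruct H as [_ Hn].
    - exists m1, (fun y => m2 y + p y). split; [split; assumption|]. split.
      + split. intros a b c Hc. rewrite (Hm2s _ _ _ Hc), (Hps _ _ _ Hc). ring.
        intros a. pose proof (Hm2n a). pose proof (Hpn a). lra.
      + intros a. rewrite Heq. ring.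
    - split. intros a b c Hc. rewrite (Hms _ _ _ Hc), (Hps _ _ _ Hc). ring.
      intros a. pose proof (Hpn a). lra.
    - split. intros a b c Hc. unfold jzero. rewrite (Hms _ _ _ Hc), (Hps _ _ _ Hc). ring.
      intros a. unfold jzero. pose proof (Hpm a). lra.
    - intros a. pose proof (Hn a) as H2. simpl in H2. lra. }
  assert (H2: forall a, p a <= m a - q a).
  { assert (H := Hpmin (fun y => m y - q y)).
    destruct H as [_ Hn].
    - destruct Hqj as [n1 [n2 [[Hn1s Hn1n] [[Hn2s Hn2n] Hqeq]]]].
      exists (fun y => m1 y + n2 y), (fun y => m2 y + n1 y). split; [|split].
      + split. intros a b c Hc. rewrite (Hm1s _ _ _ Hc), (Hn2s _ _ _ Hc). ring.
        intros a. pose proof (Hm1n a). pose proof (Hn2n a). lra.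
      + split. intros a b c Hc. rewrite (Hm2s _ _ _ Hc), (Hn1s _ _ _ Hc). ring.
        intros a. pose proof (Hm2n a). pose proof (Hn1n a). lra.
      + intros a. rewrite Heq, Hqeq. ring.
    - split. intros a b c Hc. rewrite (Hms _ _ _ Hc), (Hqs _ _ _ Hc). ring.
      intros a. pose proof (Hqn a). lra.
    - split. intros a b c Hc. unfold jzero. rewrite (Hms _ _ _ Hc), (Hqs _ _ _ Hc). ring.
      intros a. unfold jzero. pose proof (Hqm' a). lra.
    - intros a. pose proof (Hn a) as H3. simpl in H3. lra. }
  assert (Hqe: forall a, - q a = p a - m a) by (intros a; specialize (H1 a); specialize (H2 a); lra).
  split; [exact Hpsig|]. split.
  - intros a x Hinc Hsup.
    assert (H := CV_minus _ _ _ _ (Hpsig a x Hinc Hsup) (Hs a x Hinc Hsup)).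
    intros eps He. destruct (H eps He) as [N HN]. exists N. intros n Hn.
    rewrite !Hqe. apply HN; exact Hn.
  - intros a x Hinc Hsup.
    assert (H := CV_plus _ _ _ _ (Hpsig a x Hinc Hsup)
                  (CV_minus _ _ _ _ (Hpsig a x Hinc Hsup) (Hs a x Hinc Hsup))).
    intros eps He. destruct (H eps He) as [N HN]. exists N. intros n Hn.
    rewrite !Hqe. apply HN; exact Hn.
Qed.
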